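(* Let $\Gamma$ be a distance-regular graph with valency $k$ and diameter $D\geq 2$. Let $s$ be maximal such that for every vertex $x$ and all $y,z\in\Gamma(x)$ with $y\not\sim z$, there exists a co-clique of size at least $s$ in $\Delta(x)$ containing $y$ and $z$. Then (i) $s\geq \frac{k}{a_1+1}$; (ii) $c_2-1\geq \max\{\frac{s'(a_1+1)-k}{\binom{s'}{2}} : 2\leq s'\leq s\}$, and equality implies that $\Gamma$ is a Terwilliger graph.
   Context: A connected graph $\Gamma$ of diameter $D$ is distance-regular if there are integers $b_i,c_i$ ($0\le i\le D$) such that for any two vertices $x,y$ at distance $i$, exactly $c_i$ neighbours of $y$ are at distance $i-1$ from $x$ and exactly $b_i$ neighbours of $y$ are at distance $i+1$ from $x$. Then $\Gamma$ is regular of valency $k=b_0$, and $a_i:=k-b_i-c_i$. $\Gamma(x)$ denotes the set of neighbours of $x$, and the local graph $\Delta(x)$ is the subgraph induced on $\Gamma(x)$. A co-clique is a set of pairwise non-adjacent vertices. A Terwilliger graph is a connected non-complete graph such that for any two vertices $u,v$ at distance two, the subgraph induced on their common neighbours is a clique of size $\mu$, for some fixed $\mu\geq 1$. *)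

(* Defs.v *)
From mathcomp Require Import all_boot all_order all_algebra.
Set Implicit Arguments. Unset Strict Implicit. Unset Printing Implicit Defensive.
Import Order.TTheory GRing.Theory Num.Theory.

Section Graphs.
Variable T : finType.
Variable e : rel T.

Definition simple_graph : Prop := symmetric e /\ irreflexive e.

Definition nbhd (x : T) : {set T} := [set y | e x y].

Fixpoint ball (n : nat) (x : T) : {set T} :=
  match n with
  | 0 => [set x]
  | n'.+1 => ball n' x :|: [set z | [exists y in ball n' x, e y z]]
  end.

Definition dist_is (x y : T) (i : nat) : bool :=
  (y \in ball i x) && (if i is i'.+1 then y \notin ball i' x else true).

Definition connected_graph : Prop := forall x y, exists n, y \in ball n x.

Definition has_diameter (D : nat) : Prop :=
  connected_graph /\ (forall x y, y \in ball D x) /\ exists x y, dist_is x y D.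

Definition distance_regular (D : nat) (b c : nat -> nat) : Prop :=
  simple_graph /\ has_diameter D /\
  forall i, i <= D -> forall x y, dist_is x y i ->
    #|[set z | e y z & dist_is x z i.-1]| = c i /\
    #|[set z | e y z & dist_is x z i.+1]| = b i.

Definition clique (C : {set T}) : Prop :=
  forall u v, u \in C -> v \in C -> u != v -> e u v.

Definition coclique (C : {set T}) : Prop :=
  forall u v, u \in C -> v \in C -> ~~ e u v.

Definition coclique_prop (s : nat) : Prop :=
  forall x y z, e x y -> e x z -> y != z -> ~~ e y z ->
    exists C : {set T}, [/\ C \subset nbhd x, coclique C,
                           y \in C, z \in C & s <= #|C|].

Definition complete_graph : Prop := forall u v, u != v -> e u v.

Definition terwilliger : Prop :=
  connected_graph /\ ~ complete_graph /\
  exists mu : nat, 1 <= mu /\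
    forall u v, dist_is u v 2 ->
      clique (nbhd u :&: nbhd v) /\ #|nbhd u :&: nbhd v| = mu.

End Graphs.

(* a_i := k - b_i - c_i with k = b_0 *)
Definition a_num (b c : nat -> nat) (i : nat) : nat := b 0 - b i - c i.

(* Main.v *)
Require Import Defs.
From mathcomp Require Import all_boot all_order all_algebra.
From mathcomp Require Import zify.
Import Order.TTheory GRing.Theory Num.Theory.

Section Gen.
Variable T : finType.
Variable A : T -> {set T}.

Fixpoint Us (l : seq T) : {set T} := if l is x :: l' then A x :|: Us l' else set0.
Fixpoint sumA (l : seq T) : nat := if l is x :: l' then #|A x| + sumA l' else 0.
Fixpoint sumI (X : {set T}) (l : seq T) : nat :=
  if l is x :: l' then #|X :&: A x| + sumI X l' else 0.
Fixpoint pairs (l : seq T) : nat :=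
  if l is x :: l' then sumI (A x) l' + pairs l' else 0.

Lemma capU X l : #|X :&: Us l| <= sumI X l.
Proof.
elim: l => [|y l IH] /=; first by rewrite setI0 cards0.
rewrite setIUr. have := leq_card_setU (X :&: A y) (X :&: Us l).
case=> H _. lia.
Qed.

Lemma bonf l : sumA l <= #|Us l| + pairs l.
Proof.
elim: l => [|y l IH] //=.
have := cardsUI (A y) (Us l). have := capU (A y) l. lia.
Qed.

Lemma Us_le l : #|Us l| <= sumA l.
Proof.
elim: l => [|y l IH] /=; first by rewrite cards0.
have := leq_card_setU (A y) (Us l). case=> H _. lia.
Qed.

Lemma mem_Us w l : (w \in Us l) = has (fun c => w \in A c) l.
Proof. elim: l => [|y l IH] /=; by rewrite ?in_set0 // in_setU IH. Qed.

Lemma sumA_const m l : (forall i, i \in l -> #|A i| = m) -> sumA l = size l * m.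
Proof.
elim: l => [|y l IH] //= H. rewrite H ?mem_head // IH; last first.
  by move=> i Hi; apply: H; rewrite inE Hi orbT.
by rewrite mulSn.
Qed.

Lemma sumI_le X m l : (forall i, i \in l -> #|X :&: A i| <= m) -> sumI X l <= size l * m.
Proof.
elim: l => [|y l IH] //= H. rewrite mulSn leq_add ?H ?mem_head //.
by apply: IH => i Hi; apply: H; rewrite inE Hi orbT.
Qed.

Lemma pairs_le m l : uniq l ->
  (forall i j, i \in l -> j \in l -> i != j -> #|A i :&: A j| <= m) ->
  pairs l <= 'C(size l, 2) * m.
Proof.
elim: l => [|y l IH] //= /andP[yl ul] H.
rewrite binS bin1 mulnDl.
have h1 : sumI (A y) l <= size l * m.
  apply: sumI_le => i Hi; apply: H; rewrite ?mem_head ?inE ?Hi ?orbT //.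
  by apply/eqP => E; move: yl; rewrite E Hi.
have h2 : pairs l <= 'C(size l, 2) * m.
  by apply: IH => // i j Hi Hj; apply: H; rewrite inE ?Hi ?Hj orbT.
by rewrite addnC; exact: leq_add h2 h1.
Qed.

Lemma pairs_le2 m u v r : uniq [:: u, v & r] ->
  (forall i j, i \in [:: u, v & r] -> j \in [:: u, v & r] -> i != j -> #|A i :&: A j| <= m) ->
  #|A u :&: A v| < m ->
  pairs [:: u, v & r] < 'C((size r).+2, 2) * m.
Proof.
move=> U H Huv.
have U' := U. move: U' => /= /andP[ur /andP[vr ru]].
have H1 : sumI (A u) r <= size r * m.
  apply: sumI_le => i Hi; apply: H; rewrite ?inE ?Hi ?orbT ?eqxx //.
  by apply/eqP => E; move: ur; rewrite E !inE Hi orbT.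
have H2 : pairs (v :: r) <= 'C((size r).+1, 2) * m.
  apply: pairs_le => //=; first by rewrite vr.
  by move=> i j Hi Hj; apply: H; rewrite inE ?Hi ?Hj orbT.
rewrite /= in H2 *. rewrite binS bin1 mulnDl mulSn.
move: H1 H2 Huv; move: ('C(_, 2) * m) (size r * m) (#|A u :&: A v|) (sumI (A u) r) (sumI (A v) r + pairs r) => a b x y z. lia.
Qed.
End Gen.
Arguments Us {T}. Arguments sumA {T}. Arguments sumI {T}. Arguments pairs {T}.
Arguments bonf {T}. Arguments sumA_const {T}. Arguments mem_Us {T}. Arguments pairs_le {T}. Arguments pairs_le2 {T}. Arguments sumI_le {T}. Arguments Us_le {T}. Arguments capU {T}.

Section Graph.
Variable T : finType.
Variable e : rel T.
Variables (D : nat) (b c : nat -> nat).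
Hypothesis HDR : distance_regular e D b c.
Hypothesis HD : 2 <= D.

Let Hsym : symmetric e. Proof. by case: HDR => [[]]. Qed.
Let Hirr : irreflexive e. Proof. by case: HDR => [[]]. Qed.
Let Hdr := (proj2 (proj2 HDR)).

Lemma in_ball1 x z : (z \in ball e 1 x) = (z == x) || e x z.
Proof.
rewrite /= !inE; congr (_ || _).
apply/existsP/idP => [[y /andP[/set1P -> //]]| h]; exists x; by rewrite inE eqxx h.
Qed.

Lemma dist0 x z : dist_is e x z 0 = (z == x).
Proof. by rewrite /dist_is /= inE andbT. Qed.

Lemma dist1 x z : dist_is e x z 1 = e x z.
Proof.
rewrite /dist_is in_ball1 /= in_set1.
by case: eqVneq => [->|_]; rewrite ?Hirr //= andbT.
Qed.

Lemma dist2 x w z : e x w -> e w z -> z != x -> ~~ e x z -> dist_is e x z 2.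
Proof.
move=> h1 h2 h3 h4; rewrite /dist_is.
have -> : ball e 2 x = ball e 1 x :|: [set z | [exists y in ball e 1 x, e y z]] by [].
rewrite in_setU !in_ball1 (negbTE h3) (negbTE h4) orbF andbT in_set.
by apply/existsP; exists w; rewrite in_ball1 h1 orbT h2.
Qed.

Lemma dist2_inv x z : dist_is e x z 2 -> (z != x) && ~~ e x z.
Proof. by case/andP=> _; rewrite in_ball1 negb_or. Qed.

Lemma k_card x : #|nbhd e x| = b 0.
Proof.
have := @Hdr 0 (leq0n D) x x; rewrite dist0 eqxx => /(_ isT) [_ <-].
by apply: eq_card => z; rewrite !inE dist1 andbb.
Qed.

Lemma a1_card x y : e x y -> #|nbhd e x :&: nbhd e y| = a_num b c 1.
Proof.
move=> xy.
have := @Hdr 1 (ltnW HD) x y; rewrite dist1 xy => /(_ isT) [Hc Hb].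
have Hk := k_card y.
set I := nbhd e x :&: nbhd e y.
set B := [set z | e y z & dist_is e x z 2].
have E : nbhd e y :\ x = I :|: B.
  apply/setP => z; rewrite !inE.
  case: (eqVneq z x) => [->|zx] /=.
    rewrite Hirr /=; apply/esym/negP => /andP[_ /dist2_inv]; by rewrite eqxx.
  case yz: (e y z); rewrite ?andbF ?andbT //=.
  case xz: (e x z) => //=. by rewrite (dist2 _ _ _ xy yz zx) ?xz.
have dIB : I :&: B = set0.
  apply/setP=> z; rewrite !inE; apply/negP.
  move/andP=>[/andP[xz _] /andP[_ /dist2_inv]]; by rewrite xz andbF.
have E1 : [set z | e y z & dist_is e x z 1.-1] = [set x].
  apply/setP => z; rewrite !inE dist0; case: eqVneq => [->|]; by rewrite ?andbF ?andbT // -Hsym.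
rewrite E1 cards1 in Hc.
have := cardsD1 x (nbhd e y). rewrite E cardsU dIB cards0 Hk inE -Hsym xy Hb.
rewrite /a_num -Hc. lia.
Qed.

Lemma c2_card u v : dist_is e u v 2 -> #|nbhd e u :&: nbhd e v| = c 2.
Proof.
move=> H. have [<- _] := @Hdr 2 HD u v H.
by apply: eq_card => z; rewrite !inE dist1 andbC.
Qed.
End Graph.

Lemma build (T : finType) (C : {set T}) u v n : u \in C -> v \in C -> u != v ->
  n.+2 <= #|C| -> exists r, [/\ uniq [:: u, v & r], size r = n & {subset r <= C}].
Proof.
move=> uC vC uv nC.
set X := C :\ v :\ u.
have h1 := cardsD1 v C; have h2 := cardsD1 u (C :\ v).
rewrite vC in h1; rewrite !inE uv uC in h2.
exists (take n (enum X)).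
have rsub : {subset take n (enum X) <= X} by move=> w /mem_take; rewrite mem_enum.
split.
- rewrite /= take_uniq ?enum_uniq // andbT inE negb_or uv.
  apply/andP; split; apply/negP => /rsub; rewrite !inE ?eqxx //= andbF //.
- rewrite size_takel // -cardE /X; move: h1 h2 => /= h1 h2; lia.
- by move=> w /rsub; rewrite !inE => /and3P[].
Qed.

Arguments build {T}.

Section Main.
Variable T : finType.
Variable e : rel T.
Variables (D : nat) (b c : nat -> nat).
Hypothesis HDR : distance_regular e D b c.
Hypothesis HD : 2 <= D.

Let Hsym : symmetric e. Proof. by case: HDR => [[]]. Qed.
Let Hirr : irreflexive e. Proof. by case: HDR => [[]]. Qed.

Definition Ax (x i : T) : {set T} := i |: (nbhd e i :&: nbhd e x).

Lemma Acard x i : e x i -> #|Ax x i| = (a_num b c 1).+1.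
Proof.
move=> xi. have ix : e i x by rewrite Hsym.
by rewrite /Ax cardsU1 (@a1_card _ _ _ _ _ HDR HD i x ix) !inE Hirr add1n.
Qed.

Lemma pair_bound x i j : e x i -> e x j -> i != j -> ~~ e i j ->
  #|Ax x i :&: Ax x j| <= c 2 - 1.
Proof.
move=> xi xj ij nij.
have d2 : dist_is e i j 2.
  apply: (@dist2 _ _ i x j) => //; first by rewrite Hsym.
  by rewrite eq_sym.
have Hc := @c2_card _ _ _ _ _ HDR HD _ _ d2.
have h := cardsD1 x (nbhd e i :&: nbhd e j).
rewrite !inE -!(Hsym x) xi xj Hc /= in h.
have -> : c 2 - 1 = #|(nbhd e i :&: nbhd e j) :\ x| by lia.
apply: subset_leq_card; apply/subsetP => z; rewrite !inE.
case/andP => [/orP[/eqP->|/andP[iz xz]] /orP[/eqP E|/andP[jz xz']]].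
- by move: ij; rewrite E eqxx.
- by move: nij; rewrite Hsym jz.
- by move: nij; rewrite -E iz.
- by rewrite iz jz !andbT; apply/eqP => E; move: xz; rewrite E Hirr.
Qed.

Lemma pair_bound2 x i j w : e x i -> e x j -> i != j -> ~~ e i j ->
  e i w -> e j w -> w != x -> ~~ e x w ->
  #|Ax x i :&: Ax x j| <= c 2 - 2.
Proof.
move=> xi xj ij nij iw jw wx nxw.
have d2 : dist_is e i j 2.
  apply: (@dist2 _ _ i x j) => //; first by rewrite Hsym.
  by rewrite eq_sym.
have Hc := @c2_card _ _ _ _ _ HDR HD _ _ d2.
have h := cardsD1 x (nbhd e i :&: nbhd e j).
rewrite !inE -!(Hsym x) xi xj Hc /= in h.
have h' := cardsD1 w ((nbhd e i :&: nbhd e j) :\ x).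
rewrite !inE wx iw jw /= in h'.
have -> : c 2 - 2 = #|(nbhd e i :&: nbhd e j) :\ x :\ w| by lia.
apply: subset_leq_card; apply/subsetP => z; rewrite !inE.
case/andP => [/orP[/eqP->|/andP[iz xz]] /orP[/eqP E|/andP[jz xz']]].
- by move: ij; rewrite E eqxx.
- by move: nij; rewrite Hsym jz.
- by move: nij; rewrite -E iz.
- rewrite iz jz !andbT; apply/andP; split; apply/eqP => E; move: xz.
    by rewrite E (negbTE nxw).
  by rewrite E Hirr.
Qed.

Lemma ineq1 x l : (forall i, i \in l -> e x i) ->
  size l * (a_num b c 1).+1 <= b 0 + pairs (Ax x) l.
Proof.
move=> lx.
rewrite -(sumA_const (Ax x) _ l); last by move=> i /lx /Acard.
apply: leq_trans (bonf _ _) _; rewrite leq_add2r -(@k_card _ _ _ _ _ HDR x).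
apply: subset_leq_card; apply/subsetP => z; rewrite mem_Us => /hasP[i il].
by rewrite !inE => /orP[/eqP->|/andP[_ xz]] //; exact: lx.
Qed.

Lemma pairs_bound x l : uniq l -> (forall i, i \in l -> e x i) ->
  (forall i j, i \in l -> j \in l -> ~~ e i j) ->
  pairs (Ax x) l <= 'C(size l, 2) * (c 2 - 1).
Proof.
move=> ul lx lco; apply: pairs_le => // i j il jl ij.
by apply: pair_bound; rewrite ?lx ?lco.
Qed.

End Main.
Arguments Ax {T}.

Section Main2.
Variable T : finType.
Variable e : rel T.
Variables (D : nat) (b c : nat -> nat).
Hypothesis HDR : distance_regular e D b c.
Hypothesis HD : 2 <= D.

Let Hsym : symmetric e. Proof. by case: HDR => [[]]. Qed.
Let Hirr : irreflexive e. Proof. by case: HDR => [[]]. Qed.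

Lemma cover x y z : e x y -> e x z -> y != z -> ~~ e y z ->
  exists C : {set T}, [/\ C \subset nbhd e x, coclique e C, y \in C, z \in C &
     b 0 <= #|C| * (a_num b c 1).+1].
Proof.
move=> xy xz yz nyz.
pose P := fun C : {set T} => [&& C \subset nbhd e x,
   [forall u, forall v, (u \in C) ==> (v \in C) ==> ~~ e u v], y \in C & z \in C].
have P0 : P [set y; z].
  apply/and4P; split.
  - by apply/subsetP => w; rewrite !inE => /orP[]/eqP->.
  - apply/forallP => u; apply/forallP => v; apply/implyP; rewrite !inE => /orP[]/eqP->;
    apply/implyP => /orP[]/eqP->; by rewrite ?Hirr // Hsym.
  - by rewrite !inE eqxx.
  - by rewrite !inE eqxx orbT.
case: (@arg_maxnP _ [set y; z] P (fun C : {set T} => #|C|) P0) => C /and4P[Cx Cco yC zC] Cmax.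
exists C; split => //.
  move=> u v uC vC.
  by have := forallP (forallP Cco u) v; rewrite uC vC.
have cov : nbhd e x \subset Us (Ax e x) (enum C).
  apply/subsetP => w wx; rewrite mem_Us.
  case wC: (w \in C).
    by apply/hasP; exists w; rewrite ?mem_enum // !inE eqxx.
  have : [exists c in C, e c w].
    case: (boolP [exists c in C, e c w]) => // nadj; exfalso.
    have nadj' : forall c, c \in C -> ~~ e c w.
      move=> c0 cC; apply/negP => cw; move/negP: nadj; apply.
      by apply/existsP; exists c0; rewrite cC cw.
    have Pw : P (w |: C).
      apply/and4P; split.
      - by rewrite subUset sub1set wx.
      - apply/forallP => u; apply/forallP => v; apply/implyP;
        rewrite in_setU1 => /orP[/eqP->|uC]; apply/implyP;
        rewrite in_setU1 => /orP[/eqP->|vC].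
        + by rewrite Hirr.
        + by rewrite Hsym nadj'.
        + by rewrite nadj'.
        + by have := forallP (forallP Cco u) v; rewrite uC vC.
      - by rewrite in_setU1 yC orbT.
      - by rewrite in_setU1 zC orbT.
    have := Cmax _ Pw. by rewrite cardsU1 wC /= add1n ltnn.
  case/existsP => c0 /andP[cC cw].
  apply/hasP; exists c0; rewrite ?mem_enum // !inE cw.
  by rewrite inE in wx; rewrite wx orbT.
rewrite -(@k_card _ _ _ _ _ HDR x).
apply: leq_trans (subset_leq_card cov) _.
apply: leq_trans (Us_le _ _) _.
rewrite (sumA_const _ (a_num b c 1).+1) ?cardE // => i; rewrite mem_enum => iC.
apply: (@Acard _ _ _ _ _ HDR HD).
by move/subsetP: Cx => /(_ i iC); rewrite inE.
Qed.

End Main2.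

Lemma getl (T : finType) (e : rel T) (s : nat) x u v n :
  coclique_prop e s -> e x u -> e x v -> u != v -> ~~ e u v -> 2 <= n <= s ->
  exists r, [/\ uniq [:: u, v & r], size r = n - 2,
     forall i, i \in [:: u, v & r] -> e x i &
     forall i j, i \in [:: u, v & r] -> j \in [:: u, v & r] -> ~~ e i j].
Proof.
move=> Hs xu xv uv nuv /andP[n2 ns].
have [C [Cx Cco uC vC sC]] := Hs x u v xu xv uv nuv.
have hC : (n - 2).+2 <= #|C| by lia.
have [r [ur sr rC]] := build C u v _ uC vC uv hC.
have lC : {subset [:: u, v & r] <= C}.
  by move=> i; rewrite !inE => /or3P[/eqP->|/eqP->|/rC].
exists r; split => //.
- by move=> i /lC iC; move/subsetP: Cx => /(_ i iC); rewrite inE.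
- by move=> i j /lC iC /lC jC; apply: Cco.
Qed.
Arguments getl {T e s x u v n}.

Local Open Scope ring_scope.

Theorem proposition3 (T : finType) (e : rel T) (D : nat) (b c : nat -> nat)
  (s : nat) :
  distance_regular e D b c -> (2 <= D)%N ->
  coclique_prop e s -> (forall s', coclique_prop e s' -> (s' <= s)%N) ->
  ((b 0%N)%:R / ((a_num b c 1 + 1)%N)%:R <= (s%:R : rat)) /\
  ((forall s' : nat, (2 <= s' <= s)%N ->
      ((s' * ((a_num b c 1 + 1)%N))%:R - (b 0%N)%:R) / ('C(s', 2))%:R
        <= (c 2%N)%:R - 1 :> rat) /\
   ((exists s' : nat, (2 <= s' <= s)%N /\
      ((s' * ((a_num b c 1 + 1)%N))%:R - (b 0%N)%:R) / ('C(s', 2))%:R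
        = (c 2%N)%:R - 1 :> rat) ->
    terwilliger e)).
Proof.
move=> HDR HD Hs Hmax.
have Hsym : symmetric e by case: HDR => [[]].
have Hirr : irreflexive e by case: HDR => [[]].
case: (boolP [exists x, exists y, exists z, [&& e x y, e x z, y != z & ~~ e y z]]) => [Hex|Hnex]; last first.
  exfalso. have : coclique_prop e s.+1.
    move=> x y z xy xz yz nyz; exfalso; move/negP: Hnex; apply.
    by apply/existsP; exists x; apply/existsP; exists y; apply/existsP; exists z; rewrite xy xz yz nyz.
  by move/Hmax; rewrite ltnn.
case/existsP: Hex => x0 /existsP[y0 /existsP[z0 /and4P[xy0 xz0 yz0 nyz0]]].
have yx0 : e y0 x0 by rewrite Hsym.
have zx0 : e z0 x0 by rewrite Hsym.
have zy0 : z0 != y0 by rewrite eq_sym.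
have d2 : dist_is e y0 z0 2 := @dist2 _ _ y0 x0 z0 yx0 xz0 zy0 nyz0.
have c2pos : (0 < c 2)%N.
  rewrite -(@c2_card _ _ _ _ _ HDR HD _ _ d2) card_gt0; apply/set0Pn; exists x0.
  by rewrite !inE yx0 zx0.
have Ec2 : (c 2%N)%:R - 1 = (c 2 - 1)%N%:R :> rat by rewrite natrB.
rewrite Ec2 addn1.
split.
  pose m := ((b 0 + a_num b c 1) %/ (a_num b c 1).+1)%N.
  have Hm : coclique_prop e m.
    move=> x y z xy xz yz nyz.
    have [C [Cx Cco yC zC Hb]] := @cover _ _ _ _ _ HDR HD x y z xy xz yz nyz.
    exists C; split => //.
    rewrite /m -ltnS ltn_divLR // mulSn; clear m.
    by rewrite addSn ltnS addnC leq_add2l.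
  have ms := Hmax _ Hm.
  have Hb : (b 0 <= s * (a_num b c 1).+1)%N.
    have h1 := divn_eq (b 0 + a_num b c 1)%N (a_num b c 1).+1%N.
    have h2 := ltn_pmod (b 0 + a_num b c 1)%N (ltn0Sn (a_num b c 1%N)).
    have : (m * (a_num b c 1).+1 <= s * (a_num b c 1).+1)%N by rewrite leq_mul2r ms orbT.
    rewrite -/m in h1 h2.
    move: h1 h2; move: ((b 0 + a_num b c 1) %% (a_num b c 1).+1)%N (m * (a_num b c 1).+1)%N (s * (a_num b c 1).+1)%N => r1 t1 t2 h1 h2 h3; clear m Hm ms.
    apply: leq_trans h3; rewrite -(leq_add2r (a_num b c 1%N)) h1 leq_add2l; by rewrite -ltnS.
  by rewrite ler_pdivrMr ?ltr0n // -natrM ler_nat.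
split.
  move=> s' Hs'.
  have [r [ur sr lx lco]] := getl Hs xy0 xz0 yz0 nyz0 Hs'.
  have h1 := @ineq1 _ _ _ _ _ HDR HD x0 _ lx.
  have h2 := @pairs_bound _ _ _ _ _ HDR HD x0 _ ur lx lco.
  have sl : size [:: y0, z0 & r] = s' by rewrite /= sr; lia.
  rewrite sl in h1 h2.
  have Cpos : (0 < 'C(s', 2))%N by rewrite bin_gt0; lia.
  rewrite ler_pdivrMr ?ltr0n // -natrM lerBlDr -natrD ler_nat.
  move: h1 h2; move: (pairs _ _) => P. rewrite mulnC. lia.
case=> s' [Hs' Heq].
have Cpos : (0 < 'C(s', 2))%N by rewrite bin_gt0; lia.
have Cn0 : ('C(s', 2))%:R != 0 :> rat by rewrite pnatr_eq0 -lt0n.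
move: Heq => /(congr1 (fun t => t * ('C(s', 2))%:R)); rewrite divfK //.
rewrite -natrM => /eqP; rewrite subr_eq -natrD eqr_nat => /eqP Heqn.
split; first by case: HDR => _ [[]].
split.
  by move=> Hcomp; move: nyz0; rewrite Hcomp.
exists (c 2%N); split => // u v duv.
split; last exact: (@c2_card _ _ _ _ _ HDR HD _ _ duv).
move=> w1 w2; rewrite !inE => /andP[uw1 vw1] /andP[uw2 vw2] w12.
case: (boolP (e w1 w2)) => // nw; exfalso.
have /andP[vu nuv] := @dist2_inv _ _ _ _ duv.
have w1u : e w1 u by rewrite Hsym.
have w1v : e w1 v by rewrite Hsym.
have uv : u != v by rewrite eq_sym.
have [r [ur sr lx lco]] := getl Hs w1u w1v uv nuv Hs'.
have h1 := @ineq1 _ _ _ _ _ HDR HD w1 _ lx.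
have c22 : (2 <= c 2)%N.
  rewrite -(@c2_card _ _ _ _ _ HDR HD _ _ duv).
  apply: (@leq_trans #|[set w1; w2]|); first by rewrite cards2 w12.
  by apply: subset_leq_card; apply/subsetP => w; rewrite !inE => /orP[]/eqP->;
     rewrite ?uw1 ?vw1 ?uw2 ?vw2.
have h3 := pairs_le2 (Ax e w1) (c 2 - 1)%N u v r ur.
have sp : (#|Ax e w1 u :&: Ax e w1 v| < c 2 - 1)%N.
  have := @pair_bound2 _ _ _ _ _ HDR HD w1 u v w2 w1u w1v uv nuv uw2 vw2.
  rewrite eq_sym w12 nw => /(_ isT isT) h.
  move: h c22; move: (#|Ax e w1 u :&: Ax e w1 v|) (c 2%N); clear; lia.
have h4 := h3 (fun i j il jl ij => @pair_bound _ _ _ _ _ HDR HD w1 i j (lx i il) (lx j jl) ij (lco i j il jl)) sp.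
have sl : (size r).+2 = s' by rewrite sr; move: Hs'; clear; lia.
rewrite /= sl in h1 h4.
move: h1 h4 Heqn; rewrite [((c 2 - 1) * _)%N]mulnC.
move: (pairs _ _) ('C(s', 2) * (c 2 - 1))%N (s' * (a_num b c 1).+1)%N (b 0%N); clear; lia.
Qed.
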